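(* A map $M=(C_M,v_M,f_M)$ is orientable if and only if the $a$-map $M^a=(a_M\circ v_M,v_M,f_M)$ is orientable.
   Context: A map is a triple $M=(C_M,v_M,f_M)$ where $C_M$ is a finite cubic graph and $v_M,f_M$ are disjoint perfect matchings whose union is a disjoint union of 4-cycles; $a_M$ is the third perfect matching; each matching is viewed as a fixed-point-free involution on $V(C_M)$. $M$ is orientable if $C_M$ is bipartite. An $a$-map $A=(R,\Theta,\Phi)$ on a finite set $B$ is a triple of permutations with $\Theta\Phi=\Phi\Theta$, $\Theta^2=\Phi^2=\mathrm{id}$, $x,\Theta x,\Phi x,\Theta\Phi x$ distinct for all $x$, $R\Theta=\Theta R^{-1}$, and $R^n(x)\ne\Theta x$ for all integers $n$ and all $x$. $A$ is non-orientable if for some orbit of the group $\langle R,\Theta,\Phi\rangle$ the group $\langle R,\Theta\Phi\rangle$ acts transitively on that orbit; otherwise $A$ is orientable. *)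

(* Defs.v *)
From mathcomp Require Import all_boot all_fingroup.
Set Implicit Arguments. Unset Strict Implicit. Unset Printing Implicit Defensive.
Local Open Scope group_scope.

(* A map on the finite vertex set T of its cubic graph C_M, given by the
   three perfect matchings v_M, f_M, a_M viewed as fixed-point-free
   involutions.  The edges of C_M are exactly {x, v x}, {x, f x}, {x, a x};
   the three matchings are pairwise disjoint (so C_M is cubic), and the
   union of v and f is a disjoint union of 4-cycles
   x, v x, f (v x), v (f (v x)), back to x. *)
Definition fpf_involution (T : finType) (s : {perm T}) : Prop :=
  forall x, s (s x) = x /\ s x != x.

Definition is_map (T : finType) (v f a : {perm T}) : Prop :=
  [/\ fpf_involution v, fpf_involution f, fpf_involution a,
      (forall x, [/\ v x != f x, v x != a x & f x != a x]) &
      (forall x, f (v (f (v x))) = x /\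
                 uniq [:: x; v x; f (v x); v (f (v x))])].

(* M is orientable iff C_M is bipartite: there is a proper 2-colouring. *)
Definition map_orientable (T : finType) (v f a : {perm T}) : Prop :=
  exists c : T -> bool,
    forall x, [/\ c (v x) != c x, c (f x) != c x & c (a x) != c x].

(* Note: in MathComp, (s * t) x = t (s x),
   so the composite Theta o Phi is (Phi * Theta). *)
Definition amap_nonorientable (T : finType) (R Th Ph : {perm T}) : Prop :=
  exists x : T,
    [transitive <<[set R; Ph * Th]>>,
       on orbit 'P <<[set R; Th; Ph]>> x | 'P].

Definition amap_orientable (T : finType) (R Th Ph : {perm T}) : Prop :=
  ~ amap_nonorientable R Th Ph.

(* Main.v *)
Require Import Defs.
From mathcomp Require Import all_boot all_fingroup.
Local Open Scope group_scope.

Lemma PE (T : finType) (x : T) (g : {perm T}) : 'P%act x g = g x.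
Proof. by []. Qed.

Lemma gen_closed (T : finType) (A : {set {perm T}}) (P : pred {perm T}) :
  P 1 -> (forall x y, P x -> P y -> P (x * y)) -> (forall x, x \in A -> P x) ->
  forall g, g \in <<A>> -> P g.
Proof.
move=> P1 PM PA g gA.
have gK : group_set [set g | P g].
  apply/group_setP; split; first by rewrite inE.
  by move=> x y; rewrite !inE; apply: PM.
have sub : <<A>> \subset Group gK.
  by rewrite gen_subG; apply/subsetP => x /PA Px; rewrite /= inE.
by have := subsetP sub g gA; rewrite /= inE.
Qed.

Lemma orbit_closed (T : finType) (A : {set {perm T}}) (S : pred T) :
  (forall s z, s \in A -> S z -> S (s z)) ->
  forall y z, S y -> z \in orbit 'P <<A>> y -> S z.
Proof.
move=> HA y z Sy /orbitP [g gA <-]; rewrite PE.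
have := @gen_closed T A (fun g => [forall z, S z ==> S (g z)]).
move/(_ _ _ _ g gA) => H.
have H' : [forall z, S z ==> S (g z)].
  apply: H.
  - by apply/forallP => w; rewrite perm1; apply/implyP.
  - move=> s t /forallP Hs /forallP Ht; apply/forallP => w; rewrite permM.
    by apply/implyP => Sw; move/implyP: (Ht (s w)); apply; move/implyP: (Hs w); apply.
  - by move=> s sA; apply/forallP => w; apply/implyP; apply: HA.
by move/forallP: H' => /(_ y) /implyP; apply.
Qed.

Lemma in_orb (T : finType) (A : {set {perm T}}) (s : {perm T}) y :
  s \in A -> s y \in orbit 'P <<A>> y.
Proof. by move=> sA; rewrite -PE; apply: mem_orbit; apply: mem_gen. Qed.

Lemma in_orb' (T : finType) (A : {set {perm T}}) (s : {perm T}) y z :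
  s \in A -> y = s z -> y \in orbit 'P <<A>> z.
Proof. by move=> sA ->; apply: in_orb. Qed.

(* M^a = (a_M o v_M, v_M, f_M); a o v is (v * a) in MathComp. *)
Theorem proposition1p2 (T : finType) (v f a : {perm T}) :
  is_map v f a ->
  (map_orientable v f a <-> amap_orientable (v * a) v f).
Proof.
case=> Hv Hf Ha _ _.
have vv z : v (v z) = z by case: (Hv z).
have ff z : f (f z) = z by case: (Hf z).
have aa z : a (a z) = z by case: (Ha z).
set R := v * a.
have RE z : R z = a (v z) by rewrite permM.
have fvE z : (f * v) z = v (f z) by rewrite permM.
split.
- case=> c Hc [x].
  set G := <<[set R; v; f]>>; set H := <<[set R; f * v]>>.
  rewrite /amap_nonorientable. move=> Htr; case/imsetP: Htr => x0 x0S Heq.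
  have: v x0 \in orbit 'P G x.
    rewrite orbit_sym -(orbit_transl _ x0S) orbit_sym.
    by apply: in_orb; rewrite !inE eqxx !orbT.
  rewrite Heq; move/orbitP => [h hH]; rewrite PE => hx0.
  have cv z : c (v z) = ~~ c z by case: (Hc z) => /negPf; case: (c z); case: (c (v z)).
  have cf z : c (f z) = ~~ c z by case: (Hc z) => _ /negPf; case: (c z); case: (c (f z)).
  have ca z : c (a z) = ~~ c z by case: (Hc z) => _ _ /negPf; case: (c z); case: (c (a z)).
  have Hinv : [forall z, c (h z) == c z].
    apply: (@gen_closed T [set R; f * v] (fun g => [forall z, c (g z) == c z])) hH.
    + by apply/forallP => z; rewrite perm1.
    + move=> s t /forallP Hs /forallP Ht; apply/forallP => z; rewrite permM.
      by rewrite (eqP (Ht _)) (eqP (Hs _)).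
    + move=> s; rewrite !inE => /orP [] /eqP -> ; apply/forallP => z.
        by rewrite RE ca cv negbK.
      by rewrite fvE cv cf negbK.
  move/forallP/(_ x0): Hinv; rewrite hx0 cv.
  by case: (c x0).
- move=> Hn.
  set G := <<[set R; v; f]>>; set H := <<[set R; f * v]>>.
  have HG : H \subset G.
    rewrite gen_subG; apply/subsetP => s; rewrite !inE => /orP [] /eqP ->.
      by apply: mem_gen; rewrite !inE eqxx.
    by apply: groupM; apply: mem_gen; rewrite !inE eqxx ?orbT.
  have RA : R \in [set R; f * v] by rewrite !inE eqxx.
  have fvA : f * v \in [set R; f * v] by rewrite !inE eqxx orbT.
  have norm : forall h z, h \in H -> v (h (v z)) \in orbit 'P H z.
    move=> h z hH.
    suff /forallP : [forall z, v (h (v z)) \in orbit 'P H z] by apply.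
    apply: (@gen_closed T [set R; f * v]
      (fun g => [forall z, v (g (v z)) \in orbit 'P H z])) hH.
    + by apply/forallP => w; rewrite perm1 vv orbit_refl.
    + move=> s t /forallP Hs /forallP Ht; apply/forallP => w; rewrite permM.
      have Hw := Hs w; set u := v (s (v w)) in Hw.
      have -> : s (v w) = v u by rewrite /u vv.
      exact: orbit_trans (Ht u) Hw.
    + move=> s; rewrite !inE => /orP [] /eqP -> ; apply/forallP => w; rewrite orbit_sym.
        have e : w = R (v (R (v w))) by rewrite !RE !vv aa.
        by rewrite {1}e; apply: in_orb.
      have e : w = (f * v) (v ((f * v) (v w))) by rewrite !fvE !vv ff vv.
      by rewrite {1}e; apply: in_orb.
  have vcl : forall w z, z \in orbit 'P H w -> v z \in orbit 'P H (v w).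
    move=> w z /orbitP [h hH]; rewrite PE => <-.
    by have := norm h (v w) hH; rewrite vv.
  have Hcl : forall s y z, s \in [set R; f * v] -> z \in orbit 'P H y -> s z \in orbit 'P H y.
    by move=> s y z sA zy; apply: orbit_trans zy; apply: in_orb.
  have fE z : f z = v ((f * v) z) by rewrite fvE vv.
  have Hvy : forall y, v y \notin orbit 'P H y.
    move=> y; apply/negP => vyH; apply: Hn; exists y.
    suff -> : orbit 'P G y = orbit 'P H y by apply: atrans_orbit.
    apply/eqP; rewrite eqEsubset; apply/andP; split; apply/subsetP => z.
      apply: (@orbit_closed T [set R; v; f] (fun z => z \in orbit 'P H y)) => //.
      + have vS : forall z, z \in orbit 'P H y -> v z \in orbit 'P H y.
          by move=> w /vcl wH; apply: orbit_trans wH vyH.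
        move=> s w; rewrite !inE => /orP [/orP [] | ] /eqP -> wS.
        * by apply: Hcl.
        * by apply: vS.
        * by rewrite fE; apply: vS; apply: Hcl.
      + exact: orbit_refl.
    by move/orbitP => [h hH <-]; apply/orbitP; exists h => //; apply: (subsetP HG).
  have cover : forall y z, z \in orbit 'P G y ->
      (z \in orbit 'P H y) || (z \in orbit 'P H (v y)).
    move=> y z zG.
    apply: (@orbit_closed T [set R; v; f]
      (fun w => (w \in orbit 'P H y) || (w \in orbit 'P H (v y))) _ y z _ zG);
      last by rewrite orbit_refl.
    have vS : forall w, (w \in orbit 'P H y) || (w \in orbit 'P H (v y)) ->
        (v w \in orbit 'P H y) || (v w \in orbit 'P H (v y)).
      move=> w /orP [] /vcl; first by move=> ->; rewrite orbT.
      by rewrite vv => ->.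
    move=> s w; rewrite !inE => /orP [/orP [] | ] /eqP -> wS.
    * by case/orP: wS => /(Hcl _ _ _ RA) ->; rewrite ?orbT.
    * by apply: vS.
    * by rewrite fE; apply: vS; case/orP: wS => /(Hcl _ _ _ fvA) ->; rewrite ?orbT.
  pose r y := odflt y [pick z in orbit 'P G y].
  have rG y : r y \in orbit 'P G y.
    by rewrite /r; case: pickP => [z ->|] //= _; apply: orbit_refl.
  have rE y z : z \in orbit 'P G y -> r z = r y.
    move=> zG; have e := orbit_eqP zG; rewrite /r e; case: pickP => //= none; by have := none z; rewrite zG.
  pose c y := r y \in orbit 'P H y.
  have cH h z : h \in H -> c (h z) = c z.
    move=> hH; rewrite /c (rE z); last by rewrite -PE; apply: mem_orbit; apply: (subsetP HG).
    have hz : h z \in orbit 'P H z by rewrite -PE; apply: mem_orbit.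
    by rewrite orbit_sym (orbit_transl _ hz) orbit_sym.
  have cv z : c (v z) != c z.
    have vG : v z \in orbit 'P G z by apply: in_orb; rewrite !inE eqxx orbT.
    rewrite /c (rE _ _ vG).
    have nb : ~~ ((r z \in orbit 'P H z) && (r z \in orbit 'P H (v z))).
      apply/andP => [[q1 q2]]; apply: (negP (Hvy z)).
      by apply: (orbit_trans _ q1); rewrite orbit_sym.
    move: (cover z _ (rG z)) nb.
    by case: (r z \in orbit 'P H z); case: (r z \in orbit 'P H (v z)).
  exists c => z; split.
  + exact: cv.
  + by rewrite fE; rewrite -(cH (f * v) z) ?mem_gen //; apply: cv.
  + have -> : a z = R (v z) by rewrite RE vv.
    rewrite cH ?mem_gen //; exact: cv.
Qed.
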